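(* Let $W$ be a stopping time in $\mathcal{T}$ and let $0<\rho<1$. Then $W_{\mathcal{T}}^{\rho}\subset\widehat{W_{\mathcal{T}}^{\rho}}$ as open subsets of the circle, that is, $S_{\mathcal{T}}(W_{\mathcal{T}}^{\rho})\subset S_{\mathcal{T}}(\widehat{W_{\mathcal{T}}^{\rho}})$. Consequently $Cap_{\mathcal{T}}W_{\mathcal{T}}^{\rho}\le\rho^{-2}Cap_{\mathcal{T}}W$.
   Context: Tree. $\mathcal{T}$ is the rooted dyadic tree whose vertices are the dyadic arcs of the unit circle. The root $o$ is the whole circle. The vertices at level $n\ge0$ are the arcs $\{e^{it}:2\pi j2^{-n}\le t<2\pi(j+1)2^{-n}\}$ for $0\le j<2^n$. Each vertex has two children, which are the two arcs at the next level contained in it. $I(x)$ denotes the arc of the vertex $x$. Write $y\le x$ if $x$ lies in the subtree rooted at $y$ (equivalently $I(x)\subset I(y)$), and $y<x$ if moreover $y\ne x$. $[o,x]=\{y:y\le x\}$. $d(x)$ is the number of vertices in $[o,x]$, so $d(o)=1$. A stopping time is a set of pairwise incomparable vertices. $\mathcal{G}(\{o\},W)$ is the union of $[o,w]$, $w\in W$. The shadow of a stopping time $W$ is $S_{\mathcal{T}}(W)=\bigcup_{x\in W}I(x)$. Capacity. For $f:\mathcal{T}\to\mathbb{R}$ put $If(x)=\sum_{y\in[o,x]}f(y)$, and define $Cap_{\mathcal{T}}(W)=\inf\{\|f\|^2_{\ell^2}:If\ge1\text{ on }W\}$. Stopping time blowup. For $0\le\rho\le1$ and $\kappa\in\mathcal{T}$,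 $R^\rho\kappa$ is the unique vertex with $o\le R^\rho\kappa\le\kappa$ and $\rho d(\kappa)\le d(R^\rho\kappa)<\rho d(\kappa)+1$. $W^\rho_{\mathcal{T}}$ is the set of minimal elements of $\{R^\rho\kappa:\kappa\in W\}$. Capacitary blowup. Let $h$ be the unique minimizer of $Cap_{\mathcal{T}}(W)$ and $H=Ih$, so $H=1$ on $W$ and $\|h\|^2=Cap_{\mathcal{T}}W$. Then $\widehat{W^\rho_{\mathcal{T}}}=\{t\in\mathcal{G}(\{o\},W):H(t)\ge\rho\text{ and }H(x)\le\rho\text{ for all }x<t\}$. *)

(* Defs.v *)
From HB Require Import structures.
From mathcomp Require Import all_boot all_order all_algebra.
From mathcomp Require Import all_classical all_reals all_analysis.
Import Order.TTheory GRing.Theory Num.Theory.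
Local Open Scope classical_set_scope.
Local Open Scope ring_scope.

(* Vertices of the dyadic tree: finite bit strings.  The vertex s of length
   n = size s is the arc with index j = dyidx s (first bit most significant),
   i.e. {e^{it} : 2 pi j 2^-n <= t < 2 pi (j+1) 2^-n}. *)
Definition vtx := seq bool.
Definition root : vtx := [::].

Definition dyidx (s : vtx) : nat := foldl (fun acc (b : bool) => acc.*2 + b) 0%N s.

(* y <= x in the tree order : x lies in the subtree rooted at y. *)
Definition tle (y x : vtx) : bool := prefix y x.
Definition tlt (y x : vtx) : bool := prefix y x && (y != x).

(* d(x) = number of vertices in [o,x] *)
Definition depth (x : vtx) : nat := (size x).+1.

(* Arc I(x), parametrised by t/(2 pi) in [0,1). *)
Definition arc (R : realType) (x : vtx) : set R :=
  [set t | (dyidx x)%:R / 2 ^+ size x <= t /\ t < (dyidx x).+1%:R / 2 ^+ size x].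

Definition stopping_time (W : set vtx) : Prop :=
  forall x y, W x -> W y -> tle x y -> x = y.

Definition shadow (R : realType) (W : set vtx) : set R :=
  \bigcup_(x in W) arc R x.

Definition Iop {R : realType} (f : vtx -> R) (x : vtx) : R :=
  \sum_(k < (size x).+1) f (take k x).

Definition admissible {R : realType} (W : set vtx) (f : vtx -> R) : Prop :=
  forall w, W w -> 1 <= Iop f w.

Definition l2sq {R : realType} (f : vtx -> R) : \bar R :=
  \esum_(x in [set: vtx]) ((f x) ^+ 2)%:E.

Definition Cap (R : realType) (W : set vtx) : \bar R :=
  ereal_inf [set l2sq f | f in [set f : vtx -> R | admissible W f]].

Definition cap_minimizer {R : realType} (W : set vtx) (h : vtx -> R) : Prop :=
  admissible W h /\ l2sq h = Cap R W.

Definition Rrho_set {R : realType} (rho : R) (W : set vtx) : set vtx :=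
  [set y | exists2 k, W k & tle y k /\
     rho * (depth k)%:R <= (depth y)%:R /\ (depth y)%:R < rho * (depth k)%:R + 1].

Definition minimal_elts (A : set vtx) : set vtx :=
  [set y | A y /\ forall z, A z -> ~~ tlt z y].

Definition blowup {R : realType} (rho : R) (W : set vtx) : set vtx :=
  minimal_elts (Rrho_set rho W).

Definition cap_blowup {R : realType} (rho : R) (W : set vtx) (h : vtx -> R) : set vtx :=
  [set t | (exists2 w, W w & tle t w) /\ rho <= Iop h t /\
           forall x, tlt x t -> Iop h x <= rho].

(* Main.v *)
Require Import Defs.
From HB Require Import structures.
From mathcomp Require Import all_boot all_order all_algebra.
From mathcomp Require Import all_classical all_reals all_analysis.
From mathcomp Require Import ring lra zify.
Import Order.TTheory GRing.Theory Num.Theory.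
Import numFieldNormedType.Exports.
Local Open Scope classical_set_scope.
Local Open Scope ring_scope.
Lemma addRN (x y : nat) : (x + y)%R = (x + y)%N. Proof. by []. Qed.
Lemma foldl_dy (acc : nat) (q : vtx) :
  foldl (fun acc (b : bool) => acc.*2 + b) acc q = (acc * 2 ^ size q + dyidx q)%N.
Proof.
elim: q acc => [|b q IH] acc.
  by rewrite /= /dyidx /= expn0 muln1 addn0.
have -> : dyidx (b :: q) = foldl (fun acc (b : bool) => acc.*2 + b) (0.*2 + b) q by [].
rewrite /= !IH !addRN expnS -!muln2; lia.
Qed.

Lemma dyidx_cat p q : dyidx (p ++ q) = (dyidx p * 2 ^ size q + dyidx q)%N.
Proof. by rewrite /dyidx foldl_cat -/(dyidx p) foldl_dy. Qed.

Lemma dyidx_lt q : (dyidx q < 2 ^ size q)%N.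
Proof.
elim/last_ind: q => [|q b IH]; first by [].
rewrite -cats1 dyidx_cat size_cat /= expnD expn1.
have -> : dyidx [:: b] = b by case: b.
case: b; lia.
Qed.

Lemma arc_prefix (R : realType) p s : prefix p s -> Defs.arc R s `<=` Defs.arc R p.
Proof.
move=> /prefixP [q ->] t [].
rewrite dyidx_cat size_cat.
have hq := dyidx_lt q.
set a := dyidx p; set b := dyidx q; set m := size q; set n := size p.
move=> h1 h2; rewrite /Defs.arc /=.
have e : (2 ^+ (n + m) : R) = 2 ^+ n * 2 ^+ m by rewrite exprD.
have pn : (0 : R) < 2 ^+ n by rewrite exprn_gt0.
have pm : (0 : R) < 2 ^+ m by rewrite exprn_gt0.
have E2 : (2 ^ m)%:R = (2 ^+ m : R) by rewrite natrX.
rewrite e in h1 h2.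
rewrite -/a -/n.
split.
  apply: le_trans h1; rewrite ler_pdivrMr //.
  set X := (_ * _ + _)%:R.
  rewrite (_ : X / _ * _ = X / 2 ^+ m); last by field; rewrite !gt_eqF.
  rewrite ler_pdivlMr // /X -E2 -natrM ler_nat leq_addr //.
apply: lt_le_trans h2 _; rewrite ler_pdivrMr //.
rewrite (_ : a.+1%:R / 2 ^+ n * (2 ^+ n * 2 ^+ m) = a.+1%:R * 2 ^+ m); last first.
  by field; rewrite !gt_eqF.
rewrite -E2 -natrM ler_nat; rewrite mulSn; move: hq; rewrite -/b -/m; lia.
Qed.

Section Iop_facts.
Variable R : realType.

Lemma Iop_lin (f g : vtx -> R) (c : R) w :
  Iop (fun y => f y + c * g y) w = Iop f w + c * Iop g w.
Proof. by rewrite /Iop big_split /= mulr_sumr. Qed.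

Lemma Iind (z w : vtx) : Iop (fun y => ((y == z)%:R : R)) w = (prefix z w)%:R.
Proof.
rewrite /Iop; case: (boolP (prefix z w)) => pz.
  have hs : (size z < (size w).+1)%N by rewrite ltnS; apply: size_prefix.
  rewrite (bigD1 (Ordinal hs)) //= big1 ?addr0.
    by move: pz; rewrite prefixE => /eqP ->; rewrite eqxx.
  move=> [k hk] /= /eqP ne; case: eqP => // e; exfalso; apply: ne.
  apply: val_inj => /=; rewrite -e size_take; move: hk; rewrite ltnS.
  by case: ltngtP => //= ->.
rewrite big1 // => k _; case: eqP => // e; move: pz; rewrite -e prefix_take.
by [].
Qed.

Lemma Iop_prefix (f : vtx -> R) t k : prefix t k ->
  Iop f t = \sum_(j < (size t).+1) f (take j k).
Proof.
rewrite prefixE => /eqP e; rewrite /Iop; apply: eq_bigr => j _.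
case: j => j hj /=; rewrite -{1}e take_takel // -ltnS.
Qed.

Lemma noninc_nat (a : nat -> R) : (forall k, a k.+1 <= a k) ->
  forall i j, (i <= j)%N -> a j <= a i.
Proof.
move=> h i j /subnK <-; elim: (j - i)%N => [|d IH] //.
by rewrite addSn; apply: le_trans (h _) IH.
Qed.

Lemma concave_sum (a : nat -> R) (M N : nat) : (forall k, a k.+1 <= a k) ->
  (0 < M)%N -> (M <= N)%N ->
  M%:R * \sum_(k < N) a k <= N%:R * \sum_(k < M) a k.
Proof.
move=> h M0; elim: N => [|N IH]; first by rewrite leqn0 => /eqP ->.
rewrite leq_eqVlt => /orP [/eqP <- //| ]; rewrite ltnS => MN.
rewrite big_ord_recr /= mulrDr -natr1 mulrDl mul1r.
have hM : M%:R * a N <= \sum_(k < M) a k.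
  have -> : M%:R * a N = \sum_(k < M) a N by rewrite sumr_const card_ord mulr_natl.
  apply: ler_sum => k _.
  apply: noninc_nat => //; apply: leq_trans MN.
  exact: ltnW.
have := IH MN; lra.
Qed.
End Iop_facts.

Section esum_facts.
Variable R : realType.
Local Open Scope ereal_scope.

Lemma esum_split (S : set vtx) (a : vtx -> \bar R) t :
  (forall x, S x -> 0 <= a x) -> S t ->
  esum S a = a t + esum (S `&` ~` [set t]) a.
Proof.
move=> a0 St; rewrite (esumID [set t]) //.
have -> : S `&` [set t] = [set t].
  by apply/seteqP; split => [y [] //|y /= ->].
by rewrite esum_set1 //; apply: a0.
Qed.

Lemma esum_ge_term (a : vtx -> \bar R) t :
  (forall x, 0 <= a x) -> a t <= esum setT a.
Proof.
move=> a0; rewrite (@esum_split setT a t) // leeDl //; exact: esum_ge0.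
Qed.

Lemma esumZ (S : set vtx) (a : vtx -> \bar R) (c : R) : (0 <= c)%R ->
  (forall x, 0 <= a x) ->
  esum S (fun x => c%:E * a x) = c%:E * esum S a.
Proof.
move=> c0 a0; rewrite /esum -ereal_supZl //; last first.
  by apply/set0P; exists 0; exists set0; [exact: fsets_set0|rewrite fsbig_set0].
congr ereal_sup; apply/seteqP; split => y /=.
  move=> [X XS <-]; exists (\sum_(x \in X) a x); first by exists X.
  case: XS => finX _; rewrite !fsbig_finite // ge0_sume_distrr //.
move=> [z [X XS <-] <-]; exists X => //.
case: XS => finX _; rewrite !fsbig_finite // ge0_sume_distrr //.
Qed.
End esum_facts.

Section minimizer.
Variable R : realType.

Lemma ge0_fin (x : \bar R) (r : R) : (0 <= x)%E -> (x <= r%:E)%E -> exists s, x = s%:E.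
Proof. by case: x => [s| |] //; exists s. Qed.

Lemma l2sq_ge0 (f : vtx -> R) : (0 <= l2sq f)%E.
Proof. by apply: esum_ge0 => x _; rewrite lee_fin sqr_ge0. Qed.

Lemma parallel (W : set vtx) (C : R) : Cap R W = C%:E ->
  forall (f1 f2 : vtx -> R) (e1 e2 : R),
  admissible W f1 -> admissible W f2 ->
  (l2sq f1 <= (C + e1)%:E)%E -> (l2sq f2 <= (C + e2)%:E)%E ->
  forall x, ((f1 x - f2 x) / 2) ^+ 2 <= (e1 + e2) / 2.
Proof.
move=> hC f1 f2 e1 e2 a1 a2 l1 l2 x.
pose g := fun y => (f1 y + f2 y) / 2.
have ag : admissible W g.
  move=> w Ww; have H1 := a1 w Ww; have H2 := a2 w Ww.
  have -> : Iop g w = (Iop f1 w + Iop f2 w) / 2.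
    by rewrite /Iop /g -mulr_suml big_split.
  lra.
have Yge : (C%:E <= l2sq g)%E.
  by rewrite -hC; apply: ereal_inf_lbound; exists g.
have sq0 : forall (r : R), (0 <= (r ^+ 2)%:E)%E by move=> r; rewrite lee_fin sqr_ge0.
have heq : (esum setT (fun y => (((f1 y - f2 y) / 2) ^+ 2)%:E) + l2sq g =
     (2^-1)%:E * l2sq f1 + (2^-1)%:E * l2sq f2)%E.
  have h2 : forall y, (0 <= (2^-1 : R)%:E * (f1 y ^+ 2)%:E)%E.
    by move=> y; apply: mule_ge0 => //; rewrite lee_fin invr_ge0.
  have h3 : forall y, (0 <= (2^-1 : R)%:E * (f2 y ^+ 2)%:E)%E.
    by move=> y; apply: mule_ge0 => //; rewrite lee_fin invr_ge0.
  rewrite /l2sq -esumD // -!esumZ ?invr_ge0 // -esumD //.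
  apply: eq_esum => y _; rewrite -!EFinM -!EFinD /g; congr EFin.
  by field.
have [r1 E1] := @ge0_fin _ _ (l2sq_ge0 f1) l1.
have [r2 E2] := @ge0_fin _ _ (l2sq_ge0 f2) l2.
rewrite E1 E2 -!EFinM -EFinD in heq.
set X := esum _ _ in heq.
have X0 : (0 <= X)%E by apply: esum_ge0 => y _.
have Y0 := l2sq_ge0 g.
have Xle : (X <= (2^-1 * r1 + 2^-1 * r2)%:E)%E by rewrite -heq leeDl.
have Yle : (l2sq g <= (2^-1 * r1 + 2^-1 * r2)%:E)%E by rewrite -heq leeDr.
have [x' Ex] := @ge0_fin _ _ X0 Xle.
have [y' Ey] := @ge0_fin _ _ Y0 Yle.
rewrite Ex Ey -EFinD in heq; move: heq => [heq].
rewrite E1 lee_fin in l1; rewrite E2 lee_fin in l2; rewrite Ey lee_fin in Yge.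
have : ((((f1 x - f2 x) / 2) ^+ 2)%:E <= X)%E.
  exact: (@esum_ge_term R (fun y => (((f1 y - f2 y) / 2) ^+ 2)%:E)).
rewrite Ex lee_fin; lra.
Qed.

Lemma Iop_ind2 (x c w : vtx) :
  Iop (fun y => ((y == x)%:R - (y == c)%:R : R)) w = (prefix x w)%:R - (prefix c w)%:R.
Proof. by rewrite /Iop sumrB; move: (Iind R x w) (Iind R c w); rewrite /Iop => -> ->. Qed.

Lemma minimizer_mono (W : set vtx) (C : R) : Cap R W = C%:E ->
  forall h : vtx -> R, cap_minimizer W h -> forall x b, h (rcons x b) <= h x.
Proof.
move=> hC h [ah lh] x b; set c := rcons x b.
rewrite leNgt; apply/negP => hlt.
set d := h c - h x.
have d0 : 0 < d by rewrite /d subr_gt0.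
pose g y := ((y == x)%:R - (y == c)%:R : R).
pose h' y := h y + d * g y.
have neq : (c == x) = false.
  apply/negP => /eqP e; have := congr1 size e; rewrite /c size_rcons; lia.
have neq' : (x == c) = false by rewrite eq_sym.
have h'x : h' x = h c by rewrite /h' /g eqxx neq' /d /= subr0 mulr1; ring.
have h'c : h' c = h x by rewrite /h' /g eqxx neq /d /= sub0r mulrN1; ring.
have ah' : admissible W h'.
  move=> w Ww; rewrite /h' Iop_lin /g Iop_ind2.
  have H := ah w Ww.
  case: (boolP (prefix c w)) => pc.
    have -> : prefix x w by apply: prefix_trans pc; exact: prefix_rcons.
    by rewrite subrr mulr0 addr0.
  rewrite subr0; case: (prefix x w) => /=.
    by rewrite mulr1; lra.
  by rewrite mulr0 addr0.
have sq0 : forall (f : vtx -> R) y, (0 <= ((f y) ^+ 2)%:E)%E.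
  by move=> f y; rewrite lee_fin sqr_ge0.
have Sc : (setT `&` ~` [set x]) c by split => //= /eqP; rewrite neq.
have l2 : l2sq h' = l2sq h.
  rewrite /l2sq (@esum_split R setT _ x) // (@esum_split R _ _ c) //.
  rewrite [RHS](@esum_split R setT _ x) // [in RHS](@esum_split R _ _ c) //.
  rewrite h'x h'c addeCA; congr (_ + (_ + _))%E.
  apply: eq_esum => y [[_ /= yx] /= yc].
  have -> : h' y = h y.
    rewrite /h' /g; case: eqP => // _; case: eqP => // _.
    by rewrite subrr mulr0 addr0.
  by [].
have lh' : (l2sq h <= (C + 0)%:E)%E by rewrite lh hC addr0.
have lh'' : (l2sq h' <= (C + 0)%:E)%E by rewrite l2.
have := @parallel W C hC h' h 0 0 ah' ah lh'' lh' x.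
rewrite h'x addr0 mul0r => H.
have : 0 < ((h c - h x) / 2) ^+ 2 by rewrite exprn_gt0 // divr_gt0 // subr_gt0.
lra.
Qed.
End minimizer.

Section part1.
Variable R : realType.

Lemma Iop_ge_rho (W : set vtx) (C rho : R) : Cap R W = C%:E ->
  forall h : vtx -> R, cap_minimizer W h ->
  forall t k, W k -> prefix t k -> rho * (depth k)%:R <= (depth t)%:R ->
  rho <= Iop h t.
Proof.
move=> hC h hm t k Wk tk r1.
have mono := @minimizer_mono R W C hC h hm.
pose a j := h (take j k).
have am : forall j, a j.+1 <= a j.
  move=> j; rewrite /a; case: (ltnP j (size k)) => hj.
    by rewrite (take_nth false hj); apply: mono.
  by rewrite !take_oversize //; apply: leq_trans hj _.
have Et : Iop h t = \sum_(j < (size t).+1) a j by apply: Iop_prefix.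
have Ek : Iop h k = \sum_(j < (size k).+1) a j by apply: Iop_prefix; exact: prefix_refl.
have hMN : ((size t).+1 <= (size k).+1)%N by rewrite ltnS; apply: size_prefix.
have := @concave_sum R a _ _ am (ltn0Sn (size t)) hMN.
rewrite -Et -Ek.
have H1 := (proj1 hm) k Wk.
move: r1; rewrite /depth => r1.
have M0 : (0 : R) <= (size t).+1%:R by [].
have N0 : (0 : R) < (size k).+1%:R by rewrite ltr0n.
move=> H.
have : rho * (size k).+1%:R <= Iop h t * (size k).+1%:R by nra.
by rewrite ler_pM2r.
Qed.

Lemma part1 (W : set vtx) (C rho : R) : Cap R W = C%:E ->
  forall h : vtx -> R, cap_minimizer W h ->
  shadow R (blowup rho W) `<=` shadow R (cap_blowup rho W h).
Proof.
move=> hC h hm p [t [[k Wk [tk [r1 r2]]] _] pt].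
have Ht := @Iop_ge_rho W C rho hC h hm t k Wk tk r1.
have ex : exists j, (j <= size t)%N && (rho <= Iop h (take j t)).
  by exists (size t); rewrite leqnn take_size Ht.
case: (ex_minnP ex) => j /andP [jle Pj] jmin.
exists (take j t); last first.
  exact: (@arc_prefix R _ _ (prefix_take t j)).
split.
  exists k => //; apply: prefix_trans tk; exact: prefix_take.
split => // x /andP [px nx].
have sj : size (take j t) = j by rewrite size_takel.
have ex2 : x = take (size x) (take j t) by move: px; rewrite prefixE => /eqP ->.
have sx : (size x < j)%N.
  have := size_prefix px; rewrite sj leq_eqVlt => /orP [/eqP e|] //; exfalso.
  by move: nx; rewrite ex2 e take_takel // eqxx.
have xt : x = take (size x) t by rewrite {1}ex2 take_takel // ltnW.
rewrite leNgt; apply/negP => hx.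
have := jmin (size x); rewrite -xt (ltW hx) andbT.
have -> : (size x <= size t)%N by apply: leq_trans (ltnW sx) jle.
move=> /(_ isT); rewrite leqNgt sx //.
Qed.
End part1.

Section existence.
Variable R : realType.

Lemma Cap_fin (W : set vtx) : exists C : R, Cap R W = C%:E /\ 0 <= C.
Proof.
pose f0 := fun y : vtx => ((y == Defs.root)%:R : R).
have a0 : admissible W f0.
  by move=> w _; rewrite /f0 Iind prefix0s.
have l0 : l2sq f0 = 1%E.
  rewrite /l2sq (@esum_split R setT _ Defs.root) //; last by move=> *; rewrite lee_fin sqr_ge0.
  rewrite esum1 ?adde0 /f0 ?eqxx ?expr1n //.
  by move=> y [_ /= /eqP]; case: eqP => // _ _; rewrite expr0n.
have le1 : (Cap R W <= 1)%E.
  by rewrite -l0; apply: ereal_inf_lbound; exists f0.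
have ge0 : (0 <= Cap R W)%E.
  by apply: le_ereal_inf_tmp => _ [f _ <-]; apply: l2sq_ge0.
have [C EC] := @ge0_fin R _ _ ge0 le1.
by exists C; split => //; rewrite -lee_fin -EC.
Qed.

Lemma sq_lt (d e : R) : 0 < e -> d ^+ 2 < e ^+ 2 -> `|d| < e.
Proof. move=> e0 h; rewrite ltr_norml; apply/andP; split; nra. Qed.

Lemma exists_minimizer (W : set vtx) : exists h : vtx -> R, cap_minimizer W h.
Proof.
have [C [hC C0]] := Cap_fin W.
have hs : forall n : nat, exists f : vtx -> R,
    admissible W f /\ (l2sq f <= (C + n.+1%:R^-1)%:E)%E.
  move=> n.
  have e0 : (0 : R) < n.+1%:R^-1 by rewrite invr_gt0 ltr0n.
  have := @lb_ereal_inf_adherent R [set l2sq f | f in [set f : vtx -> R | admissible W f]] _ e0.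
  rewrite -/(Cap R W) hC => /(_ isT) [_ [f af <-] lt].
  by exists f; split => //; apply: ltW; rewrite EFinD.
have [F HF] := choice hs.
have cauchyb : forall n m x,
    ((F n x - F m x) / 2) ^+ 2 <= (n.+1%:R^-1 + m.+1%:R^-1) / 2.
  move=> n m x; apply: (@parallel R W C hC) => //.
  - exact: (HF n).1.
  - exact: (HF m).1.
  - exact: (HF n).2.
  - exact: (HF m).2.
have cv : forall x, cvg (F n x @[n --> \oo]).
  move=> x; apply: cauchy_cvg; apply: cauchy_exP => e e0.
  have [N HN] : exists N : nat, 4 / e ^+ 2 < N%:R.
    exists (Num.bound (4 / e ^+ 2)); apply: archi_boundP.
    by rewrite divr_ge0 // sqr_ge0.
  exists (F N x); exists N => // n /= Nn.
  rewrite /ball /=; apply: sq_lt => //.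
  have := cauchyb n N x.
  have h1 : n.+1%:R^-1 <= N.+1%:R^-1 :> R.
    by rewrite lef_pV2 ?posrE ?ltr0n // ler_nat.
  have h2 : (4 : R) / N.+1%:R < e ^+ 2.
    rewrite ltr_pdivrMr ?ltr0n // mulrC -ltr_pdivrMr ?exprn_gt0 //.
    by apply: lt_le_trans HN _; rewrite ler_nat.
  have h3 : (4 : R) / N.+1%:R = 4 * N.+1%:R^-1 by [].
  move=> H; have E : (F N x - F n x) ^+ 2 = 4 * ((F n x - F N x) / 2) ^+ 2 by field.
  have Hb : ((F n x - F N x) / 2) ^+ 2 <= N.+1%:R^-1.
    by apply: (le_trans H); rewrite ler_pdivrMr // mulr_natr mulr2n lerD2r.
  by rewrite E; apply: le_lt_trans h2; rewrite ler_pM2l.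
pose h x := lim (F n x @[n --> \oo]).
have hcv : forall x, F n x @[n --> \oo] --> h x := cv.
have ah : admissible W h.
  move=> w Ww.
  have cI : Iop (F n) w @[n --> \oo] --> Iop h w.
    rewrite /Iop; apply: cvg_big; first exact: add_continuous.
    by move=> j _; exact: hcv.
  apply: (cvgr_to_ge cI).
  by apply: nearW => n; exact: (HF n).1 w Ww.
exists h; split => //.
apply/eqP; rewrite eq_le; apply/andP; split; last first.
  by apply: ereal_inf_lbound; exists h.
rewrite hC /l2sq /esum; apply: ge_ereal_sup => _ [X [finX _] <-].
rewrite fsbig_finite // sumEFin lee_fin.
pose s : seq vtx := finmap.enum_fset (fset_set X).
have Sn : forall n, \sum_(i <- s) F n i ^+ 2 <= C + n.+1%:R^-1.
  move=> n; rewrite -lee_fin -sumEFin -fsbig_finite //; apply: le_trans (HF n).2.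
  by apply: ereal_sup_ubound; exists X.
have c1 : (fun n => \sum_(i <- s) F n i ^+ 2 - n.+1%:R^-1) @ \oo -->
          \sum_(i <- s) h i ^+ 2 - 0.
  apply: cvgB; last exact: cvg_harmonic.
  apply: cvg_big; first exact: add_continuous.
  move=> i _; under eq_fun do rewrite expr2; rewrite expr2.
  by apply: cvgM; exact: hcv.
rewrite -(subr0 (\sum_(i <- s) h i ^+ 2)).
apply: (cvgr_to_le c1); apply: nearW => n; by rewrite lerBlDr; exact: Sn.
Qed.
End existence.

Theorem mainTheorem5 (R : realType) (W : set vtx) (rho : R) :
  stopping_time W -> 0 < rho -> rho < 1 ->
  (forall h : vtx -> R, cap_minimizer W h ->
     shadow R (blowup rho W) `<=` shadow R (cap_blowup rho W h)) /\
  (Cap R (blowup rho W) <= (rho ^- 2)%:E * Cap R W)%E.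
Proof.
move=> _ r0 r1.
have [C [hC C0]] := Cap_fin R W.
split; first by move=> h hm; exact: (@part1 R W C rho hC h hm).
have [h hm] := exists_minimizer R W.
pose g x := rho^-1 * h x.
have ag : admissible (blowup rho W) g.
  move=> t [[k Wk [tk [r1' r2']]] _].
  have := @Iop_ge_rho R W C rho hC h hm t k Wk tk r1'.
  rewrite /g /Iop -mulr_sumr -/(Iop h t) => H.
  by rewrite mulrC ler_pdivlMr // mul1r.
have lg : l2sq g = ((rho ^- 2)%:E * l2sq h)%E.
  rewrite /l2sq -esumZ; first last.
  - by move=> x; rewrite lee_fin sqr_ge0.
  - by rewrite invr_ge0 exprn_ge0 // ltW.
  by apply: eq_esum => x _; rewrite -EFinM /g exprMn exprVn.
rewrite -(proj2 hm) -lg.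
by apply: ereal_inf_lbound; exists g.
Qed.
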